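(* Consider MALIQUOT. Then, for all $n$, $\mathcal{SG}(n) = \Omega(n)$.
   Context: MALIQUOT is the impartial normal-play game whose positions are the positive integers, where from $n$ a player moves to a proper divisor of $n$, i.e. $\mathrm{opt}(n)=\{d: d\mid n,\ 0<d<n\}$; the player unable to move loses. $\mathcal{SG}$ denotes the Sprague-Grundy (nim-)value, $\mathcal{SG}(n)=\mathrm{mex}\{\mathcal{SG}(x):x\in\mathrm{opt}(n)\}$. $\Omega(n)$ is the number of prime factors of $n$ counted with multiplicity. *)

(* Defs.v *)
From mathcomp Require Import all_boot.
Set Implicit Arguments. Unset Strict Implicit. Unset Printing Implicit Defensive.

(* Proper divisors of n : the options of n in MALIQUOT, {d : d | n, 0 < d < n}. *)
Definition proper_divisors (n : nat) : seq nat :=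
  [seq d <- divisors n | d < n].

Definition mex (s : seq nat) : nat :=
  find (fun k => k \notin s) (iota 0 (size s).+1).

(* Sprague-Grundy value with fuel; proper divisors are < n so fuel n suffices. *)
Fixpoint sg_fuel (fuel n : nat) : nat :=
  match fuel with
  | 0 => 0
  | fuel'.+1 => mex [seq sg_fuel fuel' d | d <- proper_divisors n]
  end.

Definition SG (n : nat) : nat := sg_fuel n n.

Definition bigOmega (n : nat) : nat := \sum_(p <- primes n) logn p n.

(* Main.v *)
Require Import Defs.
From mathcomp Require Import all_boot.

Lemma bigOmegaE n N : n < N -> bigOmega n = \sum_(0 <= p < N) logn p n.
Proof.
move=> lt; rewrite /bigOmega.
have pe : perm_eq (primes n) [seq p <- iota 0 N | p \in primes n].
  apply: uniq_perm; first exact: primes_uniq.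
    by rewrite filter_uniq // iota_uniq.
  move=> p; rewrite mem_filter mem_iota add0n; case: (boolP (p \in primes n)) => //= H.
  move: H; rewrite mem_primes => /and3P [_ n0 pd].
  by rewrite (leq_ltn_trans (dvdn_leq n0 pd) lt).
rewrite (perm_big _ pe) big_filter big_mkcond /index_iota subn0 /=.
apply: eq_bigr => p _; case: ifP => // H.
by apply/esym/eqP; rewrite eqn0Ngt logn_gt0 H.
Qed.

Lemma bigOmegaM m n : 0 < m -> 0 < n -> bigOmega (m * n) = bigOmega m + bigOmega n.
Proof.
move=> m0 n0.
have h1 : m < (m * n).+1 by rewrite ltnS leq_pmulr.
have h2 : n < (m * n).+1 by rewrite ltnS leq_pmull.
rewrite (@bigOmegaE (m * n) _ (ltnSn (m * n))) (@bigOmegaE _ _ h1) (@bigOmegaE _ _ h2) -big_split /=.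
by apply: eq_bigr => p _; rewrite lognM.
Qed.

Lemma bigOmega_prime p : prime p -> bigOmega p = 1.
Proof. by move=> pp; rewrite /bigOmega primes_prime // big_seq1 logn_prime // eqxx. Qed.


Lemma bigOmega_gt0 e : 1 < e -> 0 < bigOmega e.
Proof.
move=> e1; have pp := pdiv_prime e1.
have e0 : 0 < e by apply: ltnW.
have q0 : 0 < e %/ pdiv e by rewrite divn_gt0 ?prime_gt0 // dvdn_leq // pdiv_dvd.
have -> : e = pdiv e * (e %/ pdiv e) by rewrite mulnC divnK // pdiv_dvd.
rewrite bigOmegaM; [|exact: prime_gt0|done]. by rewrite (@bigOmega_prime _ pp).
Qed.

Lemma proper_lt n d : 0 < n -> d %| n -> d < n -> bigOmega d < bigOmega n.
Proof.
move=> n0 dn dlt.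
have d0 : 0 < d by apply: dvdn_gt0 dn.
have q0 : 0 < n %/ d by rewrite divn_gt0 // dvdn_leq.
have q1 : 1 < n %/ d by rewrite ltn_divRL // mul1n.
have -> : n = d * (n %/ d) by rewrite mulnC divnK.
rewrite bigOmegaM //.
by rewrite -{1}[bigOmega d]addn0 ltn_add2l bigOmega_gt0.
Qed.

Lemma bigOmega1 : bigOmega 1 = 0.
Proof. by rewrite (@bigOmegaE 1 2 erefl) big1 // => p _; rewrite logn1. Qed.

Lemma exists_div n j : 0 < n -> j < bigOmega n ->
  exists d, [/\ d %| n, d < n & bigOmega d = j].
Proof.
elim: n {-2}n (leqnn n) j => [|N IH] n le j n0 jlt.
  by move: n0; rewrite leqn0 in le; rewrite (eqP le).
have n1 : 1 < n.
  rewrite ltn_neqAle n0 andbT; apply/negP => /eqP E; by move: jlt; rewrite -E bigOmega1.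
have pp := pdiv_prime n1.
set m := n %/ pdiv n.
have m0 : 0 < m by rewrite divn_gt0 ?prime_gt0 // dvdn_leq // pdiv_dvd.
have nE : n = pdiv n * m by rewrite mulnC divnK // pdiv_dvd.
have Om : bigOmega n = (bigOmega m).+1.
  by rewrite nE bigOmegaM; [rewrite (@bigOmega_prime _ pp)|exact: prime_gt0|done].
have mlt : m < n by rewrite {1}nE ltn_Pmull // prime_gt1.
have mdn : m %| n by rewrite {1}nE dvdn_mull.
move: jlt; rewrite Om ltnS leq_eqVlt => /orP [/eqP ->|jlt].
  by exists m.
have mN : m <= N by rewrite -ltnS (leq_trans mlt le).
have [d [dd dl de]] := IH m mN j m0 jlt.
exists d; split => //; [exact: dvdn_trans dd mdn | exact: ltn_trans dl mlt].
Qed.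

Lemma mex_eq s k : (forall j, j < k -> j \in s) -> k \notin s -> mex s = k.
Proof.
move=> Hin Hk.
have ks : k <= size s.
  have := @uniq_leq_size _ (iota 0 k) s (iota_uniq 0 k).
  rewrite size_iota; apply => x; rewrite mem_iota add0n; exact: Hin.
have klt : k < (size s).+1 by [].
rewrite /mex; apply/eqP; rewrite eqn_leq; apply/andP; split.
  rewrite leqNgt; apply/negP => /(before_find 0).
  by rewrite nth_iota // add0n Hk.
rewrite leqNgt; apply/negP => fl.
have hs : has (fun k0 => k0 \notin s) (iota 0 (size s).+1).
  by apply/hasP; exists k => //; rewrite mem_iota add0n.
have := nth_find 0 hs.
by rewrite nth_iota ?add0n ?Hin // (ltn_trans fl klt).
Qed.

Lemma bigOmega0 : bigOmega 0 = 0.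
Proof. by rewrite (@bigOmegaE 0 1 erefl) big_nat1 logn0. Qed.

Lemma sg_ok fuel n : n <= fuel -> sg_fuel fuel n = bigOmega n.
Proof.
elim: fuel n => [|f IH] n le.
  by rewrite leqn0 in le; rewrite (eqP le) bigOmega0.
rewrite /=.
have -> : [seq sg_fuel f d | d <- proper_divisors n] = [seq bigOmega d | d <- proper_divisors n].
  apply/eq_in_map => d; rewrite mem_filter => /andP [dl _]; apply: IH.
  by rewrite -ltnS (leq_trans dl le).
case: (posnP n) => [->|n0].
  by rewrite bigOmega0.
apply: mex_eq.
  move=> j /(@exists_div _ _ n0) [d [dd dl de]].
  apply/mapP; exists d => //.
  by rewrite mem_filter dl -dvdn_divisors.
apply/mapP => [[d]]; rewrite mem_filter -dvdn_divisors // => /andP [dl dd] E.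
by move: (@proper_lt _ _ n0 dd dl); rewrite -E ltnn.
Qed.

Theorem mainTheorem1 (n : nat) : 0 < n -> SG n = bigOmega n.
Proof. by move=> _; apply: sg_ok. Qed.
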